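(* For every type $\tau$ there is a unique construction scheme over $\omega$ of type $\tau$.
   Context: A type is a sequence $\tau=\{(m_k,n_{k+1},r_{k+1})\}_{k\in\omega}$ of natural numbers with $m_0=1$; $n_k\ge2$ for $k\ge1$; every $r\in\omega$ equals $r_k$ for infinitely many $k$; $m_k>r_{k+1}$; and $m_{k+1}=r_{k+1}+(m_k-r_{k+1})n_{k+1}$ for all $k$. For a set of ordinals $X$ and $\mathcal F\subseteq[X]^{<\omega}$, $\mathcal F_k$ is the set of elements of rank $k$ in the well-founded order $(\mathcal F,\subsetneq)$; $A\sqsubseteq B$ means $A\subseteq B$ and every element of $B$ below an element of $A$ is in $A$; $A<B$ means every element of $A$ is below every element of $B$. $\mathcal F$ is a construction scheme over $X$ of type $\tau$ if (1) every finite subset of $X$ lies in a member of $\mathcal F$; (2) $|F|=m_k$ for $F\in\mathcal F_k$; (3) $E\cap F\sqsubseteq E$ and $E\cap F\sqsubseteq F$ for $E,F\in\mathcal F_k$; (4) each $F\in\mathcal F_{k+1}$ is the union of uniquely determined $F_0,\dots,F_{n_{k+1}-1}\in\mathcal F_k$ forming a $\Delta$-system with root $R(F)$, $|R(F)|=r_{k+1}$, and $R(F)<F_0\setminus R(F)<\dots<F_{n_{k+1}-1}\setminus R(F)$. *)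

(* Defs.v *)
From mathcomp Require Import all_boot all_order.
From mathcomp Require Import finmap.
Set Implicit Arguments. Unset Strict Implicit. Unset Printing Implicit Defensive.

(* A type tau = {(m_k, n_{k+1}, r_{k+1})}_k, given by three sequences
   m n r : nat -> nat; the values n 0 and r 0 are irrelevant. *)
Definition is_type (m n r : nat -> nat) : Prop :=
  [/\ m 0 = 1,
      (forall k, 2 <= n k.+1),
      (forall r0 N, exists k, N < k /\ r k = r0),
      (forall k, (r k.+1 < m k)%N) &
      (forall k, m k.+1 = r k.+1 + (m k - r k.+1) * n k.+1)].

Local Open Scope fset_scope.

(* Rank of A in the well-founded order (F, proper inclusion):
   rank A = max { rank B + 1 | B in F, B proper subset of A }.
   Computed with fuel #|A| (proper subsets of A are strictly smaller). *)
Fixpoint rank_fuel (F : pred {fset nat}) (fuel : nat) (A : {fset nat}) : nat :=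
  match fuel with
  | 0 => 0
  | fuel'.+1 =>
      \max_(B <- enum_fset (fpowerset A) | (F B) && (B != A))
         (rank_fuel F fuel' B).+1
  end.

Definition rank (F : pred {fset nat}) (A : {fset nat}) : nat :=
  rank_fuel F #|`A| A.

Definition init_seg (A B : {fset nat}) : Prop :=
  A `<=` B /\ (forall x y, x \in B -> y \in A -> x < y -> x \in A).

Definition set_lt (A B : {fset nat}) : Prop :=
  forall x y, x \in A -> y \in B -> x < y.

Definition decomposition (m n r : nat -> nat) (F : pred {fset nat}) (k : nat)
    (A : {fset nat}) (s : seq {fset nat}) : Prop :=
  [/\ size s = n k.+1,
      (forall i, i < size s -> F (nth fset0 s i) /\ rank F (nth fset0 s i) = k),
      A = \bigcup_(B <- s) B &
      exists R : {fset nat},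
        [/\ #|`R| = r k.+1,
            (forall i j, i < size s -> j < size s -> i != j ->
               nth fset0 s i `&` nth fset0 s j = R),
            (forall i, i < size s -> set_lt R (nth fset0 s i `\` R)) &
            (forall i, i.+1 < size s ->
               set_lt (nth fset0 s i `\` R) (nth fset0 s i.+1 `\` R))]].

Definition construction_scheme (m n r : nat -> nat) (F : pred {fset nat}) : Prop :=
  [/\ (forall X : {fset nat}, exists A, F A /\ X `<=` A),
      (forall A, F A -> #|`A| = m (rank F A)),
      (forall E A, F E -> F A -> rank F E = rank F A ->
          init_seg (E `&` A) E /\ init_seg (E `&` A) A) &
      (forall k A, F A -> rank F A = k.+1 ->
          exists! s : seq {fset nat}, decomposition m n r F k A s)].

(* Main.v *)
Require Import Defs.
From mathcomp Require Import all_boot all_order.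
From mathcomp Require Import finmap.
From mathcomp Require Import zify.
From Stdlib Require Import ClassicalEpsilon.
Set Implicit Arguments. Unset Strict Implicit. Unset Printing Implicit Defensive.
Local Open Scope fset_scope.
Local Open Scope nat_scope.

Definition srt (C : {fset nat}) : seq nat := sort leq (enum_fset C).
Definition psi (C : {fset nat}) (y : nat) : nat := nth 0 (srt C) y.

Lemma srt_sorted C : sorted ltn (srt C).
Proof.
rewrite ltn_sorted_uniq_leq sort_uniq fset_uniq /=.
apply: sort_sorted; exact: leq_total.
Qed.

Lemma size_srt C : size (srt C) = #|`C|.
Proof. by rewrite /srt size_sort. Qed.

Lemma mem_srt C x : (x \in srt C) = (x \in C).
Proof. by rewrite /srt mem_sort. Qed.

Lemma psi_in C y : y < #|`C| -> psi C y \in C.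
Proof. by move=> h; rewrite -mem_srt /psi mem_nth // size_srt. Qed.

Lemma psi_mono C y z : y < z -> z < #|`C| -> psi C y < psi C z.
Proof.
move=> yz zC; apply: (sorted_ltn_nth ltn_trans 0 (srt_sorted C)) => //;
rewrite inE size_srt //; exact: ltn_trans yz zC.
Qed.

Lemma psi_surj C c : c \in C -> exists2 y, y < #|`C| & psi C y = c.
Proof.
move=> cC; exists (index c (srt C)); first by rewrite -size_srt index_mem mem_srt.
by rewrite /psi nth_index // mem_srt.
Qed.

Lemma psi_ge C y : y < #|`C| -> y <= psi C y.
Proof.
elim: y => // y IH h.
have := psi_mono (ltnSn y) h; have := IH (ltnW h); lia.
Qed.

Lemma psi_id C N y : (forall x, x < N -> x \in C) -> y < N -> psi C y = y.
Proof.
move=> HN; elim: y {-2}y (leqnn y) => [|w IH] y yw yN.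
  have /psi_surj [z zC pz] := HN y yN.
  have := psi_ge zC; rewrite pz leq_eqVlt => /orP [/eqP zy|zy]; first by subst z.
  by move: yw; rewrite leqn0 => /eqP yw; move: zy; rewrite yw.
have /psi_surj [z zC pz] := HN y yN.
have := psi_ge zC; rewrite pz leq_eqVlt => /orP [/eqP zy|zy]; first by subst z.
have : z <= w by rewrite -ltnS (leq_trans zy yw).
move=> zw; have := IH z zw (ltn_trans zy yN); rewrite pz => e.
by move: zy; rewrite -e ltnn.
Qed.

Lemma psi_char S M (phi : nat -> nat) : #|`S| = M ->
  (forall x, x < M -> phi x \in S) ->
  (forall x y, x < y -> y < M -> phi x < phi y) ->
  forall x, x < M -> phi x = psi S x.
Proof.
move=> cS inS mono.
set l := map phi (iota 0 M).
have nl : forall i, i < M -> nth 0 l i = phi i.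
  by move=> i iM; rewrite /l (nth_map 0) ?size_iota // nth_iota.
have sl : sorted ltn l.
  apply/(sortedP 0) => i; rewrite size_map size_iota => iM.
  by rewrite !nl ?(ltnW iM) //; apply: mono.
have ul : uniq l by apply: sorted_uniq sl; [exact: ltn_trans|exact: ltnn].
have sub : {subset l <= srt S}.
  by move=> z /mapP [x]; rewrite mem_iota add0n => /andP [_ xM] ->; rewrite mem_srt inS.
have hs : size (srt S) <= size l by rewrite size_srt size_map size_iota cS.
have [_ eqm] := uniq_min_size ul sub hs.
have e : l = srt S.
  apply: (irr_sorted_eq ltn_trans ltnn sl (srt_sorted S) eqm).
by move=> x xM; rewrite /psi -e nl.
Qed.

Lemma srt_cat X Y : (forall x y, x \in X -> y \in Y -> x < y) ->
  srt (X `|` Y) = srt X ++ srt Y.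
Proof.
move=> XY; apply: (irr_sorted_eq ltn_trans ltnn (srt_sorted _)).
  rewrite sorted_pairwise; last exact: ltn_trans.
  rewrite pairwise_cat -!sorted_pairwise ?srt_sorted ?andbT; try exact: ltn_trans.
  by apply/allrelP => x y; rewrite !mem_srt; apply: XY.
by move=> z; rewrite mem_cat !mem_srt in_fsetU.
Qed.

Lemma card_cat X Y : (forall x y, x \in X -> y \in Y -> x < y) ->
  #|`(X `|` Y)| = (#|`X| + #|`Y|)%N.
Proof. by move=> XY; rewrite -!size_srt srt_cat // size_cat. Qed.

Lemma psi_cat X Y y : (forall x y, x \in X -> y \in Y -> x < y) ->
  psi (X `|` Y) y = if y < #|`X| then psi X y else psi Y (y - #|`X|).
Proof. by move=> XY; rewrite /psi srt_cat // nth_cat size_srt. Qed.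
Section Typ.
Variables (m n r : nat -> nat).
Hypothesis m0 : m 0 = 1.
Hypothesis Hn : forall k, 2 <= n k.+1.
Hypothesis Hr : forall k, r k.+1 < m k.
Hypothesis Hm : forall k, m k.+1 = r k.+1 + (m k - r k.+1) * n k.+1.

Lemma m_lt k : m k < m k.+1.
Proof.
rewrite Hm; have := Hr k; have := Hn k.
set a := r k.+1; set b := m k; set c := n k.+1 => hc hab.
have -> : b = a + (b - a) by lia.
rewrite addKn; set d := b - a.
have : d * 2 <= d * c by rewrite leq_mul2l hc orbT.
lia.
Qed.

Lemma m_mono j k : j < k -> m j < m k.
Proof.
elim: k => // k IH; rewrite ltnS leq_eqVlt => /orP [/eqP -> | jk].
  exact: m_lt.
exact: ltn_trans (IH jk) (m_lt k).
Qed.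

Lemma m_leq j k : m j <= m k -> j <= k.
Proof.
move=> h; rewrite leqNgt; apply/negP => kj.
have := m_mono kj; by rewrite ltnNge h.
Qed.

Lemma m_mono' j k : j <= k -> m j <= m k.
Proof. by rewrite leq_eqVlt => /orP [/eqP -> //|h]; apply: ltnW; apply: m_mono. Qed.

Lemma m_inj j k : m j = m k -> j = k.
Proof. by move=> h; apply/eqP; rewrite eqn_leq; apply/andP; split; apply: m_leq; rewrite h. Qed.

Lemma m_ge k : k < m k.
Proof. elim: k => [|k IH]; first by rewrite m0. exact: leq_ltn_trans IH (m_lt k). Qed.

Definition e (j i x : nat) : nat :=
  if x < r j.+1 then x else x + i * (m j - r j.+1).

Lemma e0 j x : e j 0 x = x.
Proof. by rewrite /e mul0n addn0; case: ifP. Qed.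

Lemma e_mono j i x y : x < y -> e j i x < e j i y.
Proof.
rewrite /e; set t := i * _; have := leq_addr t y.
case: ifP; case: ifP; lia.
Qed.

Lemma e_refl j i x y : e j i x < e j i y -> x < y.
Proof.
move=> h; rewrite ltnNge; apply/negP; rewrite leq_eqVlt => /orP [/eqP e1|lt].
  by move: h; rewrite e1 ltnn.
by have := e_mono j i lt; lia.
Qed.

Lemma e_range j i x : x < m j -> i < n j.+1 -> e j i x < m j.+1.
Proof.
move=> hx hi; rewrite /e; case: ifP => hxr.
  exact: ltn_trans hx (m_lt j).
rewrite Hm; have := Hr j; set a := r j.+1; set b := m j - a => ha.
have h1 : i.+1 * b <= b * n j.+1 by rewrite mulnC leq_mul2l hi orbT.
have h2 : x < a + b by rewrite /b; lia.
rewrite mulSn in h1; lia.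
Qed.

Lemma e_ge j i x : x <= e j i x.
Proof. rewrite /e; case: ifP => _ //; exact: leq_addr. Qed.

Lemma e_small j i x : x < r j.+1 -> e j i x = x.
Proof. by rewrite /e => ->. Qed.

Lemma e_eq j i i' x y : x < m j -> y < m j -> e j i x = e j i' y ->
  x = y /\ (i = i' \/ x < r j.+1).
Proof.
rewrite /e; have := Hr j.
set a := r j.+1; set b := m j - a => hb hxm hym.
have := leq_addr (i * b) x; have := leq_addr (i' * b) y.
case: ifP => hx; case: ifP => hy h1 h2 h; try lia.
have hi : i = i'.
  have H : forall u v, u < v -> b + u * b <= v * b.
    by move=> u v uv; rewrite -mulSn leq_mul2r uv orbT.
  case: (ltngtP i i') => // lt.
    have := H _ _ lt; rewrite /b in h hxm hym |- *; lia.
  have := H _ _ lt; rewrite /b in h hxm hym |- *; lia.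
subst i'; split; [lia | by left].
Qed.

Lemma e_same j i i' x : i = i' \/ x < r j.+1 -> e j i x = e j i' x.
Proof. by case=> [->|h] //; rewrite !e_small. Qed.

Lemma e_cover j y : y < m j.+1 ->
  exists i x, [/\ i < n j.+1, x < m j & e j i x = y].
Proof.
move=> hy.
have hb : 0 < m j - r j.+1 by have := Hr j; lia.
case: (ltnP y (r j.+1)) => hyr.
  exists 0, y; split => //; first by have := Hn j; lia.
    by have := Hr j; lia.
  by rewrite e0.
set b := m j - r j.+1.
exists ((y - r j.+1) %/ b), (r j.+1 + (y - r j.+1) %% b); split.
- rewrite ltn_divLR //; move: hy; rewrite Hm -/b; lia.
- have := ltn_pmod (y - r j.+1) hb; rewrite /b; lia.
- rewrite /e ifN; last by rewrite -leqNgt leq_addr.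
  rewrite -/b; have := divn_eq (y - r j.+1) b; lia.
Qed.

Fixpoint comp (k d : nat) (idx : nat -> nat) (x : nat) : nat :=
  if d is d'.+1 then e (k + d') (idx (k + d')) (comp k d' idx x) else x.

Definition valid k d (idx : nat -> nat) :=
  forall j, k <= j -> j < k + d -> idx j < n j.+1.

Definition img (f : nat -> nat) (N : nat) : {fset nat} := [fset x in map f (iota 0 N)].

Lemma in_img f N y : reflect (exists2 x, x < N & y = f x) (y \in img f N).
Proof.
rewrite /img in_fset; apply: (iffP mapP) => [[x]|[x xN ->]].
  by rewrite mem_iota add0n => /andP [_ xN] ->; exists x.
by exists x; rewrite // mem_iota add0n xN.
Qed.

Lemma img_in f N x : x < N -> f x \in img f N.
Proof. by move=> h; apply/in_img; exists x. Qed.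

Lemma card_img f N : (forall x y, x < y -> y < N -> f x < f y) -> #|`img f N| = N.
Proof.
move=> mono; rewrite /img card_fseq undup_id ?size_map ?size_iota //.
rewrite map_inj_in_uniq ?iota_uniq // => x y; rewrite !mem_iota !add0n => /andP [_ xN] /andP [_ yN] h.
case: (ltngtP x y) => // lt; [have := mono _ _ lt yN | have := mono _ _ lt xN]; rewrite h ltnn //.
Qed.

Lemma img_ext f g N : (forall x, x < N -> f x = g x) -> img f N = img g N.
Proof.
move=> h; apply/fsetP => y; apply/in_img/in_img => [[x xN ->]|[x xN ->]]; exists x => //.
  by rewrite h.
by rewrite h.
Qed.

Lemma comp_ext k d idx idx' x : (forall j, k <= j -> j < k + d -> idx j = idx' j) ->
  comp k d idx x = comp k d idx' x.
Proof.
elim: d => //= d IH h; rewrite h ?leq_addr ?addnS // IH // => j hj hj'.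
by apply: h => //; rewrite addnS ltnW.
Qed.

Lemma comp_mono k d idx x y : x < y -> comp k d idx x < comp k d idx y.
Proof. by elim: d => //= d IH h; apply: e_mono; apply: IH. Qed.

Lemma comp_refl k d idx x y : comp k d idx x < comp k d idx y -> x < y.
Proof.
move=> h; rewrite ltnNge; apply/negP; rewrite leq_eqVlt => /orP [/eqP e1|lt].
  by move: h; rewrite e1 ltnn.
by have := comp_mono k d idx lt; rewrite ltnNge (ltnW h).
Qed.

Lemma comp_inj k d idx x y : comp k d idx x = comp k d idx y -> x = y.
Proof.
move=> h; case: (ltngtP x y) => // lt; have := comp_mono k d idx lt; by rewrite h ltnn.
Qed.

Lemma comp_range k d idx x : valid k d idx -> x < m k -> comp k d idx x < m (k + d).
Proof.
elim: d => [|d IH] hv hx /=; first by rewrite addn0.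
rewrite addnS; apply: e_range; first apply: IH => //.
  by move=> j hj hj'; apply: hv => //; rewrite addnS ltnW.
by apply: hv; rewrite ?leq_addr // addnS.
Qed.

Lemma comp_bottom k d idx x : comp k d.+1 idx x = comp k.+1 d idx (e k (idx k) x).
Proof.
elim: d => [|d IH] /=; first by rewrite addn0.
by rewrite -IH /= addSnnS.
Qed.

Definition ext k d (idx : nat -> nat) j := if j < k + d then idx j else 0.

Lemma comp_lift k d d' idx x : comp k (d + d') (ext k d idx) x = comp k d idx x.
Proof.
elim: d' => [|d' IH] /=; first by rewrite addn0; apply: comp_ext => j _ h; rewrite /ext h.
by rewrite addnS /= IH /ext addnA ltnNge leq_addr /= e0.
Qed.

Lemma valid_ext k d d' idx : valid k d idx -> valid k (d + d') (ext k d idx).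
Proof.
move=> hv j hj hj'; rewrite /ext; case: ifP => h; first exact: hv.
exact: leq_trans _ (Hn j).
Qed.

Definition PF (A : {fset nat}) : Prop :=
  exists k d idx, valid k d idx /\ A = img (comp k d idx) (m k).

Definition Fcan (A : {fset nat}) : bool :=
  if excluded_middle_informative (PF A) then true else false.

Lemma FcanP A : Fcan A <-> PF A.
Proof. by rewrite /Fcan; case: excluded_middle_informative. Qed.

Lemma rank_fuel0 (F : pred {fset nat}) f : rank_fuel F f fset0 = 0.
Proof.
case: f => //= f; apply/eqP; rewrite -leqn0; apply/bigmax_leqP_seq => B.
by rewrite fpowersetE fsubset0 => /eqP ->; rewrite eqxx andbF.
Qed.

Lemma rank_fuel_eq (F : pred {fset nat}) f g A :
  #|`A| <= f -> #|`A| <= g -> rank_fuel F f A = rank_fuel F g A.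
Proof.
elim: f g A => [|f IH] g A.
  rewrite leqn0 => /eqP /cardfs0_eq -> _; by rewrite !rank_fuel0.
case: g => [|g] hf.
  rewrite leqn0 => /eqP /cardfs0_eq ->; by rewrite !rank_fuel0.
move=> hg /=; rewrite big_seq_cond [in RHS]big_seq_cond; apply: eq_bigr => B.
rewrite fpowersetE => /andP [BA /andP [_ nBA]].
have : #|`B| < #|`A| by apply: fproper_ltn_card; rewrite fproperEneq nBA BA.
by move=> lt; rewrite (IH g) //; rewrite -ltnS; apply: leq_trans lt _.
Qed.

Lemma rank_eq (F : pred {fset nat}) A :
  rank F A = \max_(B <- enum_fset (fpowerset A) | F B && (B != A)) (rank F B).+1.
Proof.
rewrite /rank; case hA: #|`A| => [|f].
  move/cardfs0_eq: hA => ->; rewrite rank_fuel0; apply/esym/eqP; rewrite -leqn0.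
  apply/bigmax_leqP_seq => B; by rewrite fpowersetE fsubset0 => /eqP ->; rewrite eqxx andbF.
rewrite /= big_seq_cond [in RHS]big_seq_cond; apply: eq_bigr => B.
rewrite fpowersetE => /andP [BA /andP [_ nBA]].
have : #|`B| < #|`A| by apply: fproper_ltn_card; rewrite fproperEneq nBA BA.
by rewrite hA ltnS => lt; rewrite (@rank_fuel_eq F f #|`B| B lt (leqnn _)).
Qed.

Lemma card_PF k d idx : #|`img (comp k d idx) (m k)| = m k.
Proof. by apply: card_img => x y h _; apply: comp_mono. Qed.

Definition upd k i (idx : nat -> nat) j := if j == k then i else idx j.

Lemma comp_upd k d i idx x :
  comp k d.+1 (upd k i idx) x = comp k.+1 d idx (e k i x).
Proof.
rewrite comp_bottom /upd eqxx; apply: comp_ext => j hj _.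
by rewrite ifN // neq_ltn hj orbT.
Qed.

Lemma valid_upd k d i idx : valid k.+1 d idx -> i < n k.+1 -> valid k d.+1 (upd k i idx).
Proof.
move=> hv hi j hj hj'; rewrite /upd; case: eqP => [-> //|ne].
apply: hv; first by rewrite ltn_neqAle hj andbT eq_sym; apply/eqP.
by rewrite addSnnS.
Qed.

Lemma rank_Fcan k d idx : valid k d idx -> rank Fcan (img (comp k d idx) (m k)) = k.
Proof.
elim/ltn_ind: k d idx => k IH d idx hv.
rewrite rank_eq; apply/eqP; rewrite eqn_leq; apply/andP; split.
  apply/bigmax_leqP_seq => B; rewrite fpowersetE => BA /andP [/FcanP [j [d' [idx' [hv' eB]]]] nBA].
  have lt : #|`B| < #|`img (comp k d idx) (m k)|.
    by apply: fproper_ltn_card; rewrite fproperEneq nBA BA.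
  move: lt; rewrite eB !card_PF => lt.
  have jk : j < k by rewrite ltnNge; apply/negP => kj; move: (m_mono' kj); rewrite leqNgt lt.
  by rewrite (IH j jk d' idx' hv').
case: k IH hv => // k IH hv.
have hv0 : valid k d.+1 (upd k 0 idx).
  apply: valid_upd; first by move=> j hj hj'; apply: hv; rewrite // -addSnnS.
  exact: leq_trans _ (Hn k).
set B := img (comp k d.+1 (upd k 0 idx)) (m k).
have BA : B `<=` img (comp k.+1 d idx) (m k.+1).
  apply/fsubsetP => y /in_img [x xk ->]; rewrite comp_upd e0.
  by apply: img_in; exact: ltn_trans xk (m_lt k).
have nBA : B != img (comp k.+1 d idx) (m k.+1).
  apply/negP => /eqP eB; have := card_PF k d.+1 (upd k 0 idx); rewrite -/B eB card_PF.
  by move/m_inj/eqP; rewrite eq_sym (ltn_eqF (ltnSn k)).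
apply: leq_trans _ (leq_bigmax_seq B _ _); last by rewrite nBA andbT; apply/FcanP; exists k, d.+1, (upd k 0 idx).
  by rewrite (IH k (ltnSn k) _ _ hv0).
by rewrite fpowersetE.
Qed.

Lemma valid_le k d d' idx : d' <= d -> valid k d idx -> valid k d' idx.
Proof. by move=> h hv j hj hj'; apply: hv => //; apply: leq_trans hj' _; rewrite leq_add2l. Qed.

Lemma coh k d idx idx' u u' v : valid k d idx -> valid k d idx' ->
  u < m k -> u' < m k -> v < m k ->
  comp k d idx u < comp k d idx u' -> comp k d idx u' = comp k d idx' v ->
  exists2 v', v' < m k & comp k d idx' v' = comp k d idx u.
Proof.
elim: d u u' v => [|d IH] u u' v hv hv' hu hu' hvv /=; first by move=> _ _; exists u.
set i := idx (k + d); set i' := idx' (k + d).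
have hvd : valid k d idx by apply: valid_le hv.
have hvd' : valid k d idx' by apply: valid_le hv'.
move=> /e_refl lt heq.
have [eq1 hor] := e_eq (comp_range hvd hu') (comp_range hvd' hvv) heq.
have [v' hv'k ev'] := IH u u' v hvd hvd' hu hu' hvv lt eq1.
exists v' => //; rewrite ev'; apply: e_same; case: hor => [->|h]; [by left|right].
exact: ltn_trans lt h.
Qed.

Lemma init_PF k d idx idx' : valid k d idx -> valid k d idx' ->
  init_seg (img (comp k d idx) (m k) `&` img (comp k d idx') (m k)) (img (comp k d idx) (m k)).
Proof.
move=> hv hv'; split; first exact: fsubsetIl.
move=> x y /in_img [u hu ->]; rewrite in_fsetI => /andP [/in_img [u' hu' ->] /in_img [v hvv eq]] lt.
have [v' hv'k ev'] := coh hv hv' hu hu' hvv lt eq.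
by rewrite in_fsetI img_in //= -ev' img_in.
Qed.

Lemma Fcan_lift A : Fcan A -> forall d0, exists k d idx,
  [/\ valid k d idx, d0 <= d & A = img (comp k d idx) (m k)].
Proof.
move/FcanP => [k [d [idx [hv ->]]]] d0.
exists k, (d + d0), (ext k d idx); split.
- exact: valid_ext.
- exact: leq_addl.
- by apply: img_ext => x _; rewrite comp_lift.
Qed.

Lemma Fcan_card A : Fcan A -> #|`A| = m (rank Fcan A).
Proof. by move/FcanP => [k [d [idx [hv ->]]]]; rewrite card_PF rank_Fcan. Qed.

Lemma Fcan_coh E A : Fcan E -> Fcan A -> rank Fcan E = rank Fcan A ->
  init_seg (E `&` A) E /\ init_seg (E `&` A) A.
Proof.
move=> FE FA.
have [k [d [idx [hv _ eE]]]] := Fcan_lift FE 0.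
have [k' [d' [idx' [hv' _ eA]]]] := Fcan_lift FA 0.
rewrite eE eA !rank_Fcan // => ekk; subst k'.
have e1 : img (comp k d idx) (m k) = img (comp k (d + d') (ext k d idx)) (m k).
  by apply: img_ext => x _; rewrite comp_lift.
have e2 : img (comp k d' idx') (m k) = img (comp k (d + d') (ext k d' idx')) (m k).
  by apply: img_ext => x _; rewrite addnC comp_lift.
have w1 := valid_ext (d' := d') hv; have w2 : valid k (d + d') (ext k d' idx').
  by rewrite addnC; apply: valid_ext.
rewrite e1 e2; split; first exact: init_PF.
by rewrite fsetIC; apply: init_PF.
Qed.

Lemma fset_bound (X : {fset nat}) : exists N, forall x, x \in X -> x < N.
Proof.
exists (\max_(x <- enum_fset X) x).+1 => x xX; rewrite ltnS.
exact: (leq_bigmax_seq x (P := xpredT) (F := id)).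
Qed.

Lemma Fcan_cover X : exists A, Fcan A /\ X `<=` A.
Proof.
have [N hN] := fset_bound X.
exists (img (comp N 0 (fun _ => 0)) (m N)); split.
  by apply/FcanP; exists N, 0, (fun _ => 0); split => // j hj; rewrite addn0 => hj'; have := leq_ltn_trans hj hj'; rewrite ltnn.
apply/fsubsetP => x xX; apply/in_img; exists x => //.
exact: ltn_trans (hN x xX) (m_ge N).
Qed.

Lemma in_bigcup (s : seq {fset nat}) y :
  reflect (exists2 i, i < size s & y \in nth fset0 s i) (y \in \bigcup_(B <- s) B).
Proof.
apply: (iffP (bigfcupP s y (fun B => B) (fun _ => true))) => [[B /andP [Bs _] yB]|[i hi yB]].
  by exists (index B s); rewrite ?index_mem ?nth_index.
by exists (nth fset0 s i); rewrite ?mem_nth.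
Qed.

Lemma Fcan_decomp k A : Fcan A -> rank Fcan A = k.+1 ->
  exists s, decomposition m n r Fcan k A s.
Proof.
move=> /FcanP [k' [d [idx [hv eA]]]]; rewrite eA rank_Fcan // => ek; subst k' A.
set phi := comp k.+1 d idx.
set pc := fun i => img (fun x => phi (e k i x)) (m k).
have pcE : forall i, pc i = img (comp k d.+1 (upd k i idx)) (m k).
  by move=> i; apply: img_ext => x _; rewrite comp_upd.
set s := map pc (iota 0 (n k.+1)).
have sz : size s = n k.+1 by rewrite size_map size_iota.
have ns : forall i, i < n k.+1 -> nth fset0 s i = pc i.
  by move=> i hi; rewrite (nth_map 0) ?size_iota // nth_iota.
have phim : forall x y, x < y -> phi x < phi y by move=> x y; apply: comp_mono.
set R := img phi (r k.+1).
have hrk := Hr k.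
have inR : forall z, z < r k.+1 -> phi z \in R by move=> z hz; apply: img_in.
have notR : forall i z, z < m k -> phi (e k i z) \notin R -> r k.+1 <= z.
  move=> i z hz; rewrite leqNgt; apply: contra => h; rewrite e_small //; exact: inR.
have Rpc : forall i y, y \in R -> y \in pc i.
  move=> i y /in_img [z hz ->]; rewrite -(e_small i hz); apply: img_in; exact: ltn_trans hz hrk.
exists s; split => //.
- move=> i; rewrite sz => hi; rewrite ns // pcE; split.
    by apply/FcanP; exists k, d.+1, (upd k i idx); split => //; apply: valid_upd.
  by apply: rank_Fcan; apply: valid_upd.
- apply/fsetP => y; apply/idP/in_bigcup.
    move=> /in_img [z hz ->].
    have [i [x [hi hx <-]]] := e_cover hz.
    by exists i; rewrite ?sz // ns // ; apply: img_in.
  move=> [i]; rewrite sz => hi; rewrite ns // => /in_img [x hx ->].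
  apply: img_in; exact: e_range.
exists R; split.
- by apply: card_img => x y h _; apply: phim.
- move=> i j; rewrite sz => hi hj nij; rewrite !ns //.
  apply/fsetP => y; rewrite in_fsetI; apply/idP/idP.
    move=> /andP [/in_img [x hx ->] /in_img [x' hx' /comp_inj eq]].
    have [exx [/eqP|hxr]] := e_eq hx hx' eq; first by rewrite (negPf nij).
    by rewrite e_small //; apply: inR.
  by move=> yR; rewrite !Rpc.
- move=> i; rewrite sz => hi x y xR; rewrite ns // in_fsetD => /andP [yR /in_img [z hz ey]].
  move: xR => /in_img [a ha ->]; subst y; have := notR i z hz yR => hz'.
  apply: phim; apply: leq_trans ha (leq_trans hz' (e_ge _ _ _)).
- move=> i; rewrite sz => hi x y; rewrite !ns ?(ltnW hi) // !in_fsetD.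
  move=> /andP [xR /in_img [z hz ex]] /andP [yR /in_img [z' hz' ey]]; subst x y.
  have h1 := notR _ _ hz xR; have h2 := notR _ _ hz' yR.
  apply: phim; rewrite /e !ifN -?leqNgt //.
  move: hz; have -> : m k = r k.+1 + (m k - r k.+1) by lia.
  set b := m k - r k.+1; rewrite mulSn; lia.
Qed.

Lemma fmax (A : {fset nat}) : A != fset0 -> exists2 a, a \in A & forall x, x \in A -> x <= a.
Proof.
move=> nA; have hA : 0 < #|`A| by rewrite lt0n cardfs_eq0.
exists (psi A #|`A|.-1); first by apply: psi_in; rewrite prednK.
move=> x /psi_surj [y hy <-].
have : y <= #|`A|.-1 by rewrite -ltnS prednK.
rewrite leq_eqVlt => /orP [/eqP -> //|lt]; apply: ltnW; apply: psi_mono lt _.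
by rewrite prednK.
Qed.

Definition prec (B C : {fset nat}) : bool :=
  has (fun c => all (fun b => b < c) (enum_fset B)) (enum_fset C).

Lemma precP B C : reflect (exists2 c, c \in C & forall b, b \in B -> b < c) (prec B C).
Proof.
apply: (iffP hasP) => [[c cC /allP h]|[c cC h]].
  by exists c => // b bB; apply: h.
by exists c => //; apply/allP => b bB; apply: h.
Qed.

Lemma prec_trans : transitive prec.
Proof.
move=> C B D /precP [c cC h1] /precP [d dD h2]; apply/precP; exists d => // b bB.
exact: ltn_trans (h1 b bB) (h2 c cC).
Qed.

Lemma prec_irr : irreflexive prec.
Proof. by move=> B; apply/negP => /precP [c cB h]; have := h c cB; rewrite ltnn. Qed.

Section Uniq.
Variable F : pred {fset nat}.
Hypothesis Fcard : forall A, F A -> #|`A| = m (rank F A).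
Hypothesis Fcoh : forall E A, F E -> F A -> rank F E = rank F A ->
  init_seg (E `&` A) E /\ init_seg (E `&` A) A.

Lemma decomp_sorted k A s : decomposition m n r F k A s -> sorted prec s.
Proof.
move=> [sz hF eA [R [cR hI hR hS]]].
apply/(sortedP fset0) => i hi; apply/precP.
have [F1 r1] := hF _ hi.
have ne : nth fset0 s i.+1 `\` R != fset0.
  apply/negP; rewrite fsetD_eq0 => /fsubset_leq_card; rewrite Fcard // r1 cR.
  by rewrite leqNgt Hr.
have [c cD] := fset0Pn _ ne.
exists c; first by move: cD; rewrite in_fsetD => /andP [].
move=> b bB; case: (boolP (b \in R)) => bR; first exact: (hR _ hi b c bR cD).
by apply: (hS _ hi b c) => //; rewrite in_fsetD bR.
Qed.

Lemma decomp_sub k A s s' : decomposition m n r F k A s -> decomposition m n r F k A s' ->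
  {subset s' <= s}.
Proof.
move=> [sz hF eA _] [sz' hF' eA' _] t ts.
have hi : index t s' < size s' by rewrite index_mem.
have [Ft rt] := hF' _ hi; rewrite nth_index // in Ft rt.
have ne : t != fset0.
  apply/negP => /eqP e0t; have := Fcard Ft; rewrite rt e0t cardfs0 => h.
  by have := Hr k; rewrite -h.
have [a aT ha] := fmax ne.
have aA : a \in A by rewrite eA'; apply/in_bigcup; exists (index t s'); rewrite ?nth_index.
move: aA; rewrite eA => /in_bigcup [j hj aB].
have [FB rB] := hF _ hj.
have [[_ hinit] _] := Fcoh Ft FB (etrans rt (esym rB)).
have sub : t `<=` nth fset0 s j.
  apply/fsubsetP => x xt; have := ha x xt; rewrite leq_eqVlt => /orP [/eqP -> //|lt].
  have := hinit x a xt; rewrite in_fsetI aT aB => /(_ isT lt).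
  by rewrite in_fsetI => /andP [].
have : t == nth fset0 s j by rewrite eqEfcard sub /= (Fcard Ft) (Fcard FB) rt rB.
by move/eqP ->; apply: mem_nth.
Qed.

Lemma decomp_uniq k A s s' : decomposition m n r F k A s -> decomposition m n r F k A s' ->
  s = s'.
Proof.
move=> d1 d2.
have us' : uniq s' by apply: (sorted_uniq prec_trans prec_irr); apply: decomp_sorted d2.
have hsz : size s <= size s' by case: d1 => -> _ _ _; case: d2 => -> _ _ _.
have [_ eqm] := uniq_min_size us' (decomp_sub d1 d2) hsz.
apply/esym/(irr_sorted_eq prec_trans prec_irr) => //; [exact: decomp_sorted d2|exact: decomp_sorted d1].
Qed.
End Uniq.

Section Psi.
Variable F : pred {fset nat}.
Hypothesis Fcard : forall A, F A -> #|`A| = m (rank F A).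

Lemma psi_decomp K C s i x : F C -> rank F C = K.+1 -> decomposition m n r F K C s ->
  i < n K.+1 -> x < m K -> psi C (e K i x) = psi (nth fset0 s i) x.
Proof.
move=> FC rC [sz hF eC [R [cR hI hR hS]]] hi hx.
set a := r K.+1; set b := m K - a.
have hab : a < m K by apply: Hr.
have hb : 0 < b by rewrite /b subn_gt0.
have mKab : m K = a + b by rewrite /b subnKC // ltnW.
set si := fun j => nth fset0 s j.
set B := fun j => si j `\` R.
have hn2 := Hn K.
have card_si : forall j, j < n K.+1 -> #|`si j| = m K.
  move=> j hj; have hj' : j < size s by rewrite sz.
  by have [Fj rj] := hF j hj'; rewrite Fcard // rj.
have Rsub : forall j, j < n K.+1 -> R `<=` si j.
  move=> j hj; set j' := if j == 0 then 1 else 0.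
  have hj' : j' < n K.+1 by rewrite /j'; case: (j == 0); lia.
  have nj : j != j' by rewrite /j'; case: (j =P 0) => [->|]; [|move/eqP; rewrite eq_sym].
  by rewrite -(hI j j') ?sz // fsubsetIl.
have siE : forall j, j < n K.+1 -> si j = R `|` B j.
  move=> j hj; apply/fsetP => y; rewrite in_fsetU in_fsetD.
  case: (boolP (y \in R)) => yR /=; last by [].
  by rewrite (fsubsetP (Rsub j hj)).
have RB : forall j, j < n K.+1 -> forall x y, x \in R -> y \in B j -> x < y.
  by move=> j hj; apply: hR; rewrite sz.
have card_B : forall j, j < n K.+1 -> #|`B j| = b.
  move=> j hj; have := card_si j hj; rewrite siE // card_cat ?cR; last exact: RB.
  by rewrite mKab => /eqP; rewrite eqn_add2l => /eqP.
have psi_si : forall j y, j < n K.+1 -> psi (si j) y = if y < a then psi R y else psi (B j) (y - a).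
  by move=> j y hj; rewrite siE // psi_cat ?cR //; apply: RB.
have chain : forall j j', j < j' -> j' < n K.+1 -> forall u v, u \in B j -> v \in B j' -> u < v.
  move=> j j'; elim: j' => // j' IH; rewrite ltnS leq_eqVlt => /orP [/eqP ->|lt] hj' u v uB vB.
    by apply: (hS j' _ u v uB vB); rewrite sz.
  have ne : B j' != fset0.
    by rewrite -cardfs_eq0 card_B ?(ltnW hj') // -lt0n.
  have [z zB] := fset0Pn _ ne.
  apply: ltn_trans (IH lt (ltnW hj') u z uB zB) _.
  by apply: (hS j' _ z v zB vB); rewrite sz.
have inC : forall j y, j < n K.+1 -> y \in si j -> y \in C.
  by move=> j y hj yj; rewrite eC; apply/in_bigcup; exists j; rewrite ?sz.
have mK1 : m K.+1 - a = b * n K.+1 by rewrite Hm addKn mulnC.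
set Psi := fun y => if y < a then psi R y else psi (B ((y - a) %/ b)) ((y - a) %% b).
have qlt : forall y, a <= y -> y < m K.+1 -> (y - a) %/ b < n K.+1.
  move=> y ay ym; rewrite ltn_divLR // mulnC -mK1; lia.
have Psi_in : forall y, y < a -> Psi y \in R.
  by move=> y ya; rewrite /Psi ya; apply: psi_in; rewrite cR.
have Psi_B : forall y, a <= y -> y < m K.+1 -> Psi y \in B ((y - a) %/ b).
  move=> y ay ym; rewrite /Psi ltnNge ay /=; apply: psi_in.
  by rewrite card_B ?qlt // ltn_pmod.
have hn0 : 0 < n K.+1 by lia.
have PsiE : forall y, y < m K.+1 -> Psi y = psi C y.
  apply: psi_char; first by rewrite Fcard // rC.
    move=> y ym; case: (ltnP y a) => ya.
      by apply: (inC 0) => //; rewrite (fsubsetP (Rsub 0 hn0)) // Psi_in.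
    have := Psi_B y ya ym; rewrite in_fsetD => /andP [_]; apply: inC; exact: qlt.
  move=> y y' yy' ym; case: (ltnP y' a) => y'a.
    have ya : y < a by exact: ltn_trans yy' y'a.
    by rewrite /Psi ya y'a; apply: psi_mono => //; rewrite cR.
  case: (ltnP y a) => ya.
    by apply: (RB _ (qlt y' y'a ym)); [exact: Psi_in|exact: Psi_B].
  have yym : y < m K.+1 by exact: ltn_trans yy' ym.
  have le : (y - a) %/ b <= (y' - a) %/ b by apply: leq_div2r; lia.
  move: le; rewrite leq_eqVlt => /orP [/eqP eq|lt]; last first.
    by apply: (chain _ _ lt (qlt _ y'a ym)); apply: Psi_B.
  rewrite /Psi (ltnNge y a) (ltnNge y' a) ya y'a /= eq; apply: psi_mono.
    have h1 := divn_eq (y - a) b; have h2 := divn_eq (y' - a) b.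
    rewrite eq in h1; lia.
  by rewrite card_B ?ltn_pmod // -eq; apply: qlt.
have ex : e K i x < m K.+1 by apply: e_range.
rewrite -PsiE // psi_si // /e /Psi.
case: (ltnP x a) => xa; first by rewrite xa.
rewrite ltnNge (leq_trans xa (leq_addr _ _)) /=.
have -> : x + i * (m K - r K.+1) - a = i * b + (x - a) by rewrite -/a -/b; lia.
have xab : x - a < b by lia.
by rewrite divnMDl // divn_small // addn0 modnMDl modn_small.
Qed.
End Psi.

Lemma comp_cover d k y : y < m (k + d) ->
  exists idx, valid k d idx /\ exists2 x, x < m k & comp k d idx x = y.
Proof.
elim: d y => [|d IH] y hy.
  exists (fun _ => 0); split; first by move=> j hj; rewrite addn0 => hj'; have := leq_ltn_trans hj hj'; rewrite ltnn.
  by exists y; rewrite // -(addn0 k).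
move: hy; rewrite addnS => /e_cover [i [y' [hi hy' ey]]].
have [idx [hv [x hx ex]]] := IH y' hy'.
exists (upd (k + d) i idx); split.
  move=> j hj; rewrite addnS ltnS leq_eqVlt => /orP [/eqP ->|lt]; first by rewrite /upd eqxx.
  by rewrite /upd (ltn_eqF lt); apply: hv.
exists x => //=; rewrite {1}/upd eqxx -ey; congr e.
rewrite -ex; apply: comp_ext => j _ lt; by rewrite /upd (ltn_eqF lt).
Qed.

Section Tree.
Variable F : pred {fset nat}.
Hypothesis Fcard : forall A, F A -> #|`A| = m (rank F A).
Hypothesis Fdec : forall k A, F A -> rank F A = k.+1 ->
  exists! s : seq {fset nat}, decomposition m n r F k A s.

Lemma tree d j C idx : F C -> rank F C = j + d -> valid j d idx ->
  F (img (fun x => psi C (comp j d idx x)) (m j)).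
Proof.
elim: d C => [|d IH] C FC rC hv.
  have -> : img (fun x => psi C (comp j 0 idx x)) (m j) = C; last by [].
  have cC : #|`C| = m j by rewrite Fcard // rC addn0.
  apply/fsetP => y; apply/in_img/idP => [[x hx ->]|yC]; first by apply: psi_in; rewrite cC.
  by have [x hx <-] := psi_surj yC; exists x; rewrite -?cC.
move: rC; rewrite addnS => rC.
have [s [ds _]] := Fdec FC rC.
set i := idx (j + d).
have hi : i < n (j + d).+1 by apply: hv; rewrite ?leq_addr // addnS.
have hvd : valid j d idx by apply: valid_le hv.
have e1 : img (fun x => psi C (comp j d.+1 idx x)) (m j) =
          img (fun x => psi (nth fset0 s i) (comp j d idx x)) (m j).
  apply: img_ext => x hx /=; apply: (psi_decomp Fcard FC rC ds hi).
  exact: comp_range.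
rewrite e1; case: ds => sz hF _ _.
have hi' : i < size s by rewrite sz.
have [Fs rs] := hF i hi'.
exact: IH.
Qed.
End Tree.

Lemma Fcan_scheme : construction_scheme m n r Fcan.
Proof.
split.
- exact: Fcan_cover.
- exact: Fcan_card.
- exact: Fcan_coh.
- move=> k A FA rA; have [s ds] := Fcan_decomp FA rA.
  exists s; split => // s' ds'; exact: (decomp_uniq Fcan_card Fcan_coh ds ds').
Qed.

Lemma init_sub (A D : {fset nat}) a : a \in A -> a \in D -> (forall x, x \in A -> x <= a) ->
  init_seg (A `&` D) A -> A `<=` D.
Proof.
move=> aA aD ha [_ hinit]; apply/fsubsetP => x xA.
have := ha x xA; rewrite leq_eqVlt => /orP [/eqP -> //|lt].
have := hinit x a xA; rewrite in_fsetI aA aD => /(_ isT lt).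
by rewrite in_fsetI => /andP [].
Qed.

Lemma scheme_eq F : construction_scheme m n r F -> F =1 Fcan.
Proof.
move=> [Fcov Fcard Fcoh Fdec] A; apply/idP/idP => [FA|/FcanP [k [d [idx [hv eA]]]]].
- set k := rank F A.
  have cA : #|`A| = m k by rewrite Fcard.
  have ne : A != fset0 by rewrite -cardfs_eq0 cA -lt0n; apply: leq_ltn_trans (m_ge k).
  have [a aA ha] := fmax ne.
  have [C [FC sC]] := Fcov (img id a.+1).
  have inC : forall x, x < a.+1 -> x \in C by move=> x hx; apply: (fsubsetP sC); apply: img_in.
  set K := rank F C.
  have cC : #|`C| = m K by rewrite Fcard.
  have AC : A `<=` C by apply/fsubsetP => x xA; apply: inC; rewrite ltnS ha.
  have kK : k <= K by apply: m_leq; rewrite -cA -cC fsubset_leq_card.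
  have aC : a < m K.
    rewrite -cC; have := fsubset_leq_card sC; rewrite card_img //.
  have eK : K = k + (K - k) by rewrite subnKC.
  have aK : a < m (k + (K - k)) by rewrite -eK.
  have [idx [hv [x0 hx0 ex0]]] := comp_cover aK.
  set D := img (fun x => psi C (comp k (K - k) idx x)) (m k).
  have rC : rank F C = k + (K - k) by rewrite -eK.
  have FD : F D by apply: (tree Fcard Fdec FC rC hv).
  have compC : forall x, x < m k -> comp k (K - k) idx x < #|`C|.
    by move=> x hx; have := comp_range hv hx; rewrite -eK cC.
  have cD : #|`D| = m k.
    apply: card_img => x y xy ym; apply: psi_mono; first exact: comp_mono.
    exact: compC.
  have rD : rank F D = k by apply: m_inj; rewrite -Fcard.
  have aD : a \in D.
    have -> : a = psi C (comp k (K - k) idx x0) by rewrite ex0 (psi_id inC).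
    exact: img_in.
  have [[_ hinit] _] := Fcoh A D FA FD (esym rD).
  have AD : A `<=` D by apply: (init_sub aA aD ha); split => //; exact: fsubsetIl.
  have eAD : A = D by apply/eqP; rewrite eqEfcard AD cA cD /=.
  apply/FcanP; exists k, (K - k), idx; split => //; rewrite eAD; apply: img_ext => x hx.
  have h1 : psi C (comp k (K - k) idx x) \in A by rewrite eAD; apply: img_in.
  have h2 := ha _ h1; have h3 := psi_ge (compC x hx).
  by apply: (psi_id inC); rewrite ltnS; apply: leq_trans h3 h2.
- set M := m (k + d).
  have [C [FC sC]] := Fcov (img id M).
  have inC : forall x, x < M -> x \in C by move=> x hx; apply: (fsubsetP sC); apply: img_in.
  set K := rank F C.
  have cC : #|`C| = m K by rewrite Fcard.
  have kdK : k + d <= K.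
    by apply: m_leq; rewrite -cC -/M; have := fsubset_leq_card sC; rewrite card_img.
  set d' := K - (k + d).
  have rC : rank F C = k + (d + d') by rewrite addnA subnKC.
  have FD := tree Fcard Fdec FC rC (valid_ext (d' := d') hv).
  suff <- : img (fun x => psi C (comp k (d + d') (ext k d idx) x)) (m k) = A by [].
  rewrite eA; apply: img_ext => x hx; rewrite comp_lift; apply: (psi_id inC).
  exact: comp_range.
Qed.
End Typ.

Theorem mainTheorem19 (m n r : nat -> nat) :
  is_type m n r ->
  (exists F : pred {fset nat}, construction_scheme m n r F) /\
  (forall F G : pred {fset nat},
      construction_scheme m n r F -> construction_scheme m n r G -> F =1 G).
Proof.
move=> [m0 Hn _ Hr Hm]; split.
  by exists (Fcan m n r); apply: Fcan_scheme.
move=> F G sF sG A.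
by rewrite (scheme_eq m0 Hn Hr Hm sF) (scheme_eq m0 Hn Hr Hm sG).
Qed.
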